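(* For every $1$-Sperner hypergraph ${\cal H}=(V,{\cal E})$ with ${\cal E}\neq\{\emptyset\}$, the characteristic vectors $\chi^e\in\mathbb{R}^V$ ($e\in{\cal E}$) of its hyperedges are linearly independent.
   Context: A hypergraph ${\cal H}=(V,{\cal E})$ consists of a finite vertex set $V$ and a set ${\cal E}$ of subsets of $V$. It is $1$-Sperner if every two distinct hyperedges $e,f$ satisfy $\min\{|e\setminus f|,|f\setminus e|\}=1$. The characteristic vector $\chi^e\in\{0,1\}^V$ of $e$ has $\chi^e_v=1$ iff $v\in e$. *)

(* Defs.v *)
From mathcomp Require Import all_boot all_order all_algebra.
Set Implicit Arguments. Unset Strict Implicit. Unset Printing Implicit Defensive.
Import GRing.Theory Num.Theory.
Local Open Scope ring_scope.

Definition one_sperner (V : finType) (E : {set {set V}}) : Prop :=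
  forall e f, e \in E -> f \in E -> e != f ->
    minn #|e :\: f| #|f :\: e| = 1%N.

Definition chi (R : nzRingType) (V : finType) (e : {set V}) : V -> R :=
  fun v => if v \in e then 1 else 0.

Definition chi_lin_indep (R : nzRingType) (V : finType) (E : {set {set V}}) : Prop :=
  forall c : {set V} -> R,
    (forall v : V, \sum_(e in E) c e * chi R e v = 0) ->
    forall e, e \in E -> c e = 0.

(* Main.v *)
Require Import Defs.
From mathcomp Require Import all_boot all_order all_algebra.
From mathcomp Require Import reals.
From mathcomp Require Import zify ring.
Import GRing.Theory Num.Theory.
Local Open Scope ring_scope.

Lemma sum_ind_le (N m : nat) :
  (\sum_(t < N) (t.+2 <= m)%N = minn N m.-1)%N.
Proof.
elim: N => [|N IH]; first by rewrite big_ord0 min0n.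
rewrite big_ord_recr /= IH.
case: (leqP N.+2 m) => H /=; lia.
Qed.

Lemma inter_card (V : finType) (E : {set {set V}}) e f :
  one_sperner E -> set0 \notin E -> e \in E -> f \in E ->
  #|e :&: f| = ((e == f) + \sum_(t < #|V|) ((t.+2 <= #|e|) && (t.+2 <= #|f|)))%N.
Proof.
move=> HS H0 He Hf.
have Hm : forall m1 m2, (m1 <= #|V| -> \sum_(t < #|V|) ((t.+2 <= m1) && (t.+2 <= m2)) = (minn m1 m2).-1)%N.
  move=> m1 m2 Hm1.
  under eq_bigr => t _ do rewrite -leq_min.
  rewrite sum_ind_le; have : (minn m1 m2 <= #|V|)%N by rewrite geq_min Hm1.
  lia.
rewrite Hm ?max_card //.
case: eqP => [<-|/eqP Hne].
  rewrite setIid minnn.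
  have : e != set0 by apply: contraNneq H0 => <-.
  rewrite -card_gt0; lia.
have := HS e f He Hf Hne.
have := cardsID f e; have := cardsID e f; rewrite setIC.
lia.
Qed.

Theorem proposition15 (R : realType) (V : finType) (E : {set {set V}}) :
  one_sperner E -> E != [set set0] -> chi_lin_indep R E.
Proof.
move=> HS HE c Hc.
have H0 : set0 \notin E.
  apply/negP => H0; move: HE; apply/negP; rewrite negbK eqEsubset sub1set H0 andbT.
  apply/subsetP => f Hf; rewrite in_set1; apply/negPn/negP => Hne.
  have Hne' : set0 != f by rewrite eq_sym.
  have := HS _ _ H0 Hf Hne'.
  by rewrite set0D cards0 min0n.
pose b (t : 'I_#|V|) (e : {set V}) : R := ((t.+2 <= #|e|)%N)%:R.
have Hpt : forall e f, e \in E -> f \in E ->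
    \sum_v chi R e v * chi R f v = (e == f)%:R + \sum_(t < #|V|) b t e * b t f.
  move=> e f He Hf.
  transitivity (#|e :&: f|%:R : R).
    rewrite -sum1_card natr_sum [RHS]big_mkcond /=; apply: eq_bigr => v _.
    by rewrite /chi inE; case: (v \in e); case: (v \in f); rewrite ?mulr1 ?mulr0 ?mul0r.
  rewrite (@inter_card V E e f HS H0 He Hf) natrD natr_sum; congr (_ + _).
  by apply: eq_bigr => t _; rewrite /b; case: (_ <= _)%N; case: (_ <= _)%N; rewrite ?mulr1 ?mulr0.
have Hsq : \sum_v (\sum_(e in E) c e * chi R e v) ^+ 2 = 0.
  by apply: big1 => v _; rewrite Hc expr0n.
have Hexp : \sum_v (\sum_(e in E) c e * chi R e v) ^+ 2 =
    \sum_(e in E) c e ^+ 2 + \sum_(t < #|V|) (\sum_(e in E) c e * b t e) ^+ 2.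
  transitivity (\sum_(e in E) \sum_(f in E) c e * c f *
       ((e == f)%:R + \sum_(t < #|V|) b t e * b t f)).
    transitivity (\sum_v \sum_(e in E) \sum_(f in E) c e * c f * (chi R e v * chi R f v)).
      apply: eq_bigr => v _; rewrite expr2 mulr_suml; apply: eq_bigr => e _.
      rewrite mulr_sumr; apply: eq_bigr => f _; rewrite -!mulrA; congr (_ * _).
      by rewrite mulrCA.
    rewrite exchange_big; apply: eq_bigr => e He.
    rewrite exchange_big; apply: eq_bigr => f Hf.
    by rewrite -mulr_sumr Hpt.
  have Hsec : \sum_(t < #|V|) (\sum_(e in E) c e * b t e) ^+ 2 =
      \sum_(e in E) \sum_(f in E) c e * c f * \sum_(t < #|V|) b t e * b t f.
    transitivity (\sum_(t < #|V|) \sum_(e in E) \sum_(f in E) c e * c f * (b t e * b t f)).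
      apply: eq_bigr => t _; rewrite expr2 mulr_suml; apply: eq_bigr => e _.
      rewrite mulr_sumr; apply: eq_bigr => f _; ring.
    rewrite exchange_big; apply: eq_bigr => e _.
    rewrite exchange_big; apply: eq_bigr => f _; by rewrite mulr_sumr.
  rewrite Hsec -big_split; apply: eq_bigr => e He /=.
  under eq_bigr => f _ do rewrite mulrDr.
  rewrite big_split /=; congr (_ + _).
  rewrite (bigD1 e He) /= eqxx mulr1 big1 ?addr0 ?expr2 // => f /andP[_ Hf].
  by rewrite eq_sym (negbTE Hf) mulr0.
rewrite Hexp in Hsq.
have Hp1 : 0 <= \sum_(e in E) c e ^+ 2 by apply: sumr_ge0 => e _; apply: sqr_ge0.
have Hp2 : 0 <= \sum_(t < #|V|) (\sum_(e in E) c e * b t e) ^+ 2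
  by apply: sumr_ge0 => t _; apply: sqr_ge0.
have Hz : \sum_(e in E) c e ^+ 2 = 0.
  apply/eqP; rewrite Order.POrderTheory.eq_le Hp1 andbT; have := Hp2; rewrite -(lerDl (\sum_(e in E) c e ^+ 2)) Hsq; done.
move=> e He; have /psumr_eq0P Hall := Hz.
apply/eqP; rewrite -sqrf_eq0; apply/eqP; apply: Hall => // f _; apply: sqr_ge0.
Qed.
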